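(* Let $(\mathcal G_{yz},\beta)$ be obtained from $(\mathcal G_x,\alpha)$ by decomposing the node $x$ into $y$ and $z$, and assume the FCFS chains $W_x$ and $W_{yz}$ are positive recurrent. Let $\mathbb E[Q_x]$ and $\mathbb E[Q_{yz}]$ be the stationary mean word lengths (mean numbers of items) of $W_x$ and $W_{yz}$. Then $\mathbb E[Q_x]=\mathbb E[Q_{yz}]$.
   Context: A matching model consists of a finite connected simple graph and an arrival distribution on its nodes with positive entries. Under FCFS, the state is the word of unmatched item classes in order of arrival; an arriving item of class $i$ deletes the oldest letter of the word that is a neighbour of $i$, and if there is none $i$ is appended. Decomposition: given $\mathcal G_x=(\mathcal V,\xi)$ with node $x$ and arrival distribution $\alpha$, $\mathcal G_{yz}$ has node set $(\mathcal V\setminus\{x\})\cup\{y,z\}$ with $y,z$ new nodes; edges among $\mathcal V\setminus\{x\}$ are as in $\mathcal G_x$, each of $y$ and $z$ is adjacent exactly to the neighbours of $x$ in $\mathcal G_x$ (so $y,z$ are not adjacent), and the arrival distribution $\beta$ satisfies $\beta_y>0$, $\beta_z>0$, $\beta_y+\beta_z=\alpha_x$, $\beta_i=\alpha_i$ for $i\ne x$. *)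

(* Defs.v *)
From HB Require Import structures.
From mathcomp Require Import all_boot all_order all_algebra.
From mathcomp Require Import all_classical all_reals all_analysis.
Set Implicit Arguments. Unset Strict Implicit. Unset Printing Implicit Defensive.
Import Order.TTheory GRing.Theory Num.Theory.
Local Open Scope ring_scope.
Local Open Scope classical_set_scope.

Section MatchingModel.
Variables (R : realType) (V : finType).

Definition matching_model (e : rel V) (alpha : V -> R) : Prop :=
  [/\ symmetric e, irreflexive e, (forall u v, connect e u v),
      (forall v, 0 < alpha v) & \sum_(v : V) alpha v = 1].

(* FCFS dynamics: an arriving item of class i deletes the oldest letter of the
   word w that is a neighbour of i; if there is none, i is appended. *)
Definition fcfs_step (e : rel V) (w : seq V) (i : V) : seq V :=
  let k := find (e i) w in
  if (k < size w)%N then take k w ++ drop k.+1 w else rcons w i.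

Definition fcfs_trans (e : rel V) (alpha : V -> R) (w w' : seq V) : R :=
  \sum_(i : V | fcfs_step e w i == w') alpha i.

(* hit_prob n w = probability that the chain started at w hits the empty word
   for the first time at time exactly n. *)
Fixpoint hit_prob (e : rel V) (alpha : V -> R) (n : nat) (w : seq V) : R :=
  match n with
  | 0 => (w == [::])%:R
  | n'.+1 => if w == [::] then 0
             else \sum_(i : V) alpha i * hit_prob e alpha n' (fcfs_step e w i)
  end.

(* return_prob n = probability that the chain started at the empty word
   returns to the empty word for the first time at time exactly n (n >= 1). *)
Definition return_prob (e : rel V) (alpha : V -> R) (n : nat) : R :=
  match n with
  | 0 => 0
  | n'.+1 => \sum_(i : V) alpha i * hit_prob e alpha n' (fcfs_step e [::] i)
  end.

(* Positive recurrence of the FCFS chain (at the empty word, which is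
   reachable from every state): the return time to the empty word is a.s.
   finite and has finite expectation. *)
Definition positive_recurrent (e : rel V) (alpha : V -> R) : Prop :=
  ((\sum_(n <oo) (return_prob e alpha n)%:E) = 1)%E /\
  ((\sum_(n <oo) ((n%:R * return_prob e alpha n)%:E)) < +oo)%E.

Definition stationary (e : rel V) (alpha : V -> R) (pi : seq V -> R) : Prop :=
  [/\ (forall w, 0 <= pi w),
      (\esum_(w in [set: seq V]) (pi w)%:E = 1)%E &
      (forall w', (pi w')%:E =
         \esum_(w in [set: seq V]) (pi w * fcfs_trans e alpha w w')%:E)].

Definition mean_length (pi : seq V -> R) : \bar R :=
  \esum_(w in [set: seq V]) (pi w * (size w)%:R)%:E.

End MatchingModel.

(* (G_yz, beta) on node type U is obtained from (G_x, alpha) on node type V by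
   decomposing x into y and z: phi : U -> V sends y and z to x and is a
   bijection from U \ {y,z} onto V \ {x}; adjacency is pulled back along phi
   (so y, z are adjacent exactly to the neighbours of x, and not to each other
   since e_x is irreflexive); beta_y, beta_z > 0, beta_y + beta_z = alpha_x,
   beta_u = alpha_(phi u) otherwise. *)
Definition decomposition (R : realType) (V U : finType)
    (ex : rel V) (alpha : V -> R) (x : V)
    (eyz : rel U) (beta : U -> R) (y z : U) : Prop :=
  exists phi : U -> V,
    [/\ y != z, phi y = x, phi z = x &
        (forall u, phi u = x -> u = y \/ u = z)] /\
    [/\ {in [pred u | phi u != x] &, injective phi},
        (forall v, v != x -> exists u, phi u = v) &
        (forall u u', eyz u u' = ex (phi u) (phi u'))] /\
    [/\ 0 < beta y, 0 < beta z, beta y + beta z = alpha x &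
        (forall u, phi u != x -> beta u = alpha (phi u))].

(* Main.v *)
Require Import Defs.
From HB Require Import structures.
From mathcomp Require Import all_boot all_order all_algebra.
From mathcomp Require Import all_classical all_reals all_analysis.
Import Order.TTheory GRing.Theory Num.Theory.
Local Open Scope ring_scope.
Local Open Scope classical_set_scope.
Local Open Scope ereal_scope.

Lemma esum_swap (R : realType) (A B : choiceType) (a : A -> B -> \bar R) :
  (forall i j, 0 <= a i j) ->
  \esum_(i in [set: A]) \esum_(j in [set: B]) a i j =
  \esum_(j in [set: B]) \esum_(i in [set: A]) a i j.
Proof.
move=> a0; rewrite !esum_esum//.
have E1 : [set: A] `*`` (fun=> [set: B]) = [set: A * B].
  by apply/seteqP; split => // -[].
have E2 : [set: B] `*`` (fun=> [set: A]) = [set: B * A].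
  by apply/seteqP; split => // -[].
rewrite E1 E2 (reindex_esum [set: A * B] [set: B * A] (fun k => (k.2, k.1))) //.
rewrite setTT_bijective; exists (fun k => (k.2, k.1)); by case.
Qed.

Lemma esumZl (R : realType) (T : choiceType) (r : R) (a : T -> \bar R) :
  (0 <= r)%R -> (forall i, 0 <= a i) ->
  \esum_(i in [set: T]) (r%:E * a i) = r%:E * \esum_(i in [set: T]) a i.
Proof.
move=> r0 a0; rewrite /esum -ereal_supZl//; last first.
  by apply/set0P; exists 0; exists set0; [exact: fsets_set0|rewrite fsbig_set0].
congr ereal_sup; apply/seteqP; split => _ /= [A FA <-].
  by exists (\sum_(x \in A) a x); [exists A|rewrite ge0_mule_fsumr].
by case: FA => [y FA <-]; exists y => //; rewrite ge0_mule_fsumr.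
Qed.

Lemma esum_point (R : realType) (T : choiceType) (t : T) (c : \bar R) :
  0 <= c -> \esum_(i in [set: T]) (if i == t then c else 0) = c.
Proof.
move=> c0; rewrite -[RHS](esum_set1 (t:=t) (a:=fun _ => c))//.
rewrite [RHS]esum_mkcond; apply: eq_esum => i _.
by rewrite (_ : (i \in [set t]) = (i == t))//; apply/idP/idP; rewrite inE /= => /eqP.

Qed.

Lemma esum_ge1 (R : realType) (T : choiceType) (a : T -> \bar R) t :
  (forall i, 0 <= a i) -> a t <= \esum_(i in [set: T]) a i.
Proof.
move=> a0; rewrite -(esum_set1 (t:=t) (a:=a))// esum_mkcond; apply: le_esum => i _.
by case: ifP.
Qed.

Lemma esum_le_eq (R : realType) (T : choiceType) (f g : T -> R) :
  (forall t, 0 <= f t <= g t)%R ->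
  \esum_(t in [set: T]) (f t)%:E = \esum_(t in [set: T]) (g t)%:E ->
  \esum_(t in [set: T]) (g t)%:E < +oo -> forall t, f t = g t.
Proof.
move=> fg E glt t.
have f0 t' : (0 <= f t')%R by case/andP: (fg t').
have d0 t' : (0 <= g t' - f t')%R by case/andP: (fg t') => _; rewrite subr_ge0.
have : \esum_(t in [set: T]) (g t)%:E =
       \esum_(t in [set: T]) (f t)%:E + \esum_(t in [set: T]) (g t - f t)%:E.
  rewrite -esumD; last by move=> *; rewrite lee_fin.
    by apply: eq_esum => i _; rewrite -EFinD addrC subrK.
  by move=> *; rewrite lee_fin.
have ffin : \esum_(t in [set: T]) (f t)%:E \is a fin_num.
  rewrite ge0_fin_numE; first by rewrite E.
  by apply: esum_ge0 => *; rewrite lee_fin.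
rewrite -E => Heq.
have H : \esum_(t in [set: T]) (g t - f t)%:E = 0.
  set D := \esum_(t in [set: T]) (g t - f t)%:E.
  by rewrite -(addeK D ffin) (addeC D) /D -Heq subee.
have d0E t' : 0 <= (g t' - f t')%:E by rewrite lee_fin.
have := @esum_ge1 R T (fun t => (g t - f t)%:E) t d0E.
rewrite H lee_fin => h; apply/eqP; rewrite eq_le; case/andP: (fg t) => _ -> /=; by rewrite -subr_le0.
Qed.

Section Chain.
Variables (R : realType) (V : finType) (e : rel V) (alpha : V -> R).
Hypothesis alpha_ge0 : forall v, (0 <= alpha v)%R.
Hypothesis alpha_sum : (\sum_(v : V) alpha v = 1)%R.

Local Notation P := (fcfs_trans e alpha).

Lemma P_ge0 w w' : (0 <= P w w')%R.
Proof. by rewrite /fcfs_trans sumr_ge0. Qed.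

Lemma P_EFin (c : R) w w' : (c * P w w')%:E =
  \sum_(i : V) (if w' == fcfs_step e w i then (c * alpha i)%:E else 0).
Proof.
rewrite /fcfs_trans mulr_sumr -sumEFin big_mkcond /=.
by apply: eq_bigr => i _; rewrite eq_sym; case: ifP.
Qed.

Lemma esum_P (c : R) w : (0 <= c)%R ->
  \esum_(w' in [set: seq V]) (c * P w w')%:E = c%:E.
Proof.
move=> c0; under eq_esum do rewrite P_EFin.
rewrite esum_sum; last by move=> i j _ _; case: ifP => //; rewrite lee_fin mulr_ge0.
under eq_bigr do rewrite esum_point ?lee_fin ?mulr_ge0//.
by rewrite sumEFin -mulr_sumr alpha_sum mulr1.
Qed.

Lemma fubini_P (f : seq V -> R) : (forall w, 0 <= f w)%R ->
  \esum_(w' in [set: seq V]) \esum_(w in [set: seq V]) (f w * P w w')%:E =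
  \esum_(w in [set: seq V]) (f w)%:E.
Proof.
move=> f0; rewrite -esum_swap; last by move=> *; rewrite lee_fin mulr_ge0 ?P_ge0.
by apply: eq_esum => w _; rewrite esum_P.
Qed.

Hypothesis e_sym : symmetric e.
Hypothesis nbr : forall a, exists b, e a b.
Hypothesis alpha_gt0 : forall v, (0 < alpha v)%R.

Lemma step_cons a t b : e a b -> fcfs_step e (a :: t) b = t.
Proof. by move=> ab; rewrite /fcfs_step /= e_sym ab /= drop0. Qed.

Lemma P_cons a t : exists b, (alpha b <= P (a :: t) t)%R.
Proof.
have [b ab] := nbr a; exists b.
rewrite /fcfs_trans (bigD1 b) /=; last by rewrite step_cons.
by rewrite lerDl sumr_ge0.
Qed.

Lemma reach (g : seq V -> R) :
  (forall w t, g w * P w t <= g t)%R ->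
  forall w, (0 < g w)%R -> (0 < g [::])%R.
Proof.
move=> cl; elim => [//|a t IH] ga; apply: IH.
have [b hb] := P_cons a t.
apply: (lt_le_trans _ (cl _ _)); apply: (lt_le_trans _ (ler_wpM2l (ltW ga) hb)).
by rewrite mulr_gt0.
Qed.

Lemma close_lemma (pi mu : seq V -> R) :
  stationary e alpha pi -> (forall w, 0 <= mu w <= pi w)%R ->
  (forall t, \esum_(w in [set: seq V]) (mu w * P w t)%:E = (mu t)%:E) ->
  forall w t, ((pi w - mu w) * P w t <= pi t - mu t)%R.
Proof.
move=> [p0 _ pst] hmu muinv w t.
have h := pst t.
have : (pi t)%:E = (mu t)%:E +
   \esum_(w in [set: seq V]) ((pi w - mu w) * P w t)%:E.
  rewrite h -muinv -esumD.
  - by apply: eq_esum => i _; rewrite -EFinD -mulrDl addrC subrK.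
  - by move=> i _; case/andP: (hmu i) => ? _; rewrite lee_fin mulr_ge0 ?P_ge0.
  - by move=> i _; case/andP: (hmu i) => _ ?; rewrite lee_fin mulr_ge0 ?P_ge0 ?subr_ge0.
have hge := @esum_ge1 R _ (fun w => ((pi w - mu w) * P w t)%:E) w.
move=> E.
have : ((mu t)%:E + ((pi w - mu w) * P w t)%:E <= (pi t)%:E).
  rewrite E leeD2l// hge// => i.
  by case/andP: (hmu i) => _ ?; rewrite lee_fin mulr_ge0 ?P_ge0 ?subr_ge0.
by rewrite -EFinD lee_fin -lerBrDl.
Qed.

Lemma stat_unique (pi1 pi2 : seq V -> R) :
  stationary e alpha pi1 -> stationary e alpha pi2 -> forall w, pi1 w = pi2 w.
Proof.
move=> st1 st2.
have [p1 s1 i1] := st1; have [p2 s2 i2] := st2.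
pose mu w := if (pi1 w <= pi2 w)%R then pi1 w else pi2 w.
have mu1 w : (0 <= mu w <= pi1 w)%R.
  rewrite /mu; case: ifP => h; first by rewrite p1 lexx.
  by rewrite p2 /=; apply: ltW; rewrite ltNge h.
have mu2 w : (0 <= mu w <= pi2 w)%R.
  rewrite /mu; case: ifP => h; first by rewrite p1 h.
  by rewrite p2 lexx.
have mu0 w : (0 <= mu w)%R by case/andP: (mu1 w).
pose muP t := \esum_(w in [set: seq V]) (mu w * P w t)%:E.
have muP0 t : 0 <= muP t.
  by apply: esum_ge0 => w _; rewrite lee_fin mulr_ge0 ?P_ge0.
have muPle t : muP t <= (mu t)%:E.
  have le1 : muP t <= (pi1 t)%:E.
    rewrite i1; apply: le_esum => w _; rewrite lee_fin ler_wpM2r ?P_ge0//.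
    by case/andP: (mu1 w).
  have le2 : muP t <= (pi2 t)%:E.
    rewrite i2; apply: le_esum => w _; rewrite lee_fin ler_wpM2r ?P_ge0//.
    by case/andP: (mu2 w).
  by rewrite /mu; case: ifP.
have muPfin t : muP t \is a fin_num.
  rewrite ge0_fin_numE//; exact: (le_lt_trans (muPle t) (ltry _)).
pose m t := fine (muP t).
have mE t : (m t)%:E = muP t by rewrite /m fineK.
have mle t : (0 <= m t <= mu t)%R.
  by rewrite -!lee_fin mE muP0 muPle.
have musum : \esum_(t in [set: seq V]) (mu t)%:E <= 1.
  by rewrite -s1; apply: le_esum => t _; rewrite lee_fin; case/andP: (mu1 t).
have minv : forall t, m t = mu t.
  apply: esum_le_eq => //.
    under eq_esum do rewrite mE.
    by rewrite /muP fubini_P.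
  exact: (le_lt_trans musum (ltry _)).
have muinv t : \esum_(w in [set: seq V]) (mu w * P w t)%:E = (mu t)%:E.
  by rewrite -minv mE.
have cl1 := @close_lemma pi1 mu st1 mu1 muinv.
have cl2 := @close_lemma pi2 mu st2 mu2 muinv.
have r1 w : (0 <= pi1 w - mu w)%R by case/andP: (mu1 w) => _; rewrite subr_ge0.
have r2 w : (0 <= pi2 w - mu w)%R by case/andP: (mu2 w) => _; rewrite subr_ge0.
have zero0 : (pi1 [::] - mu [::] = 0 \/ pi2 [::] - mu [::] = 0)%R.
  by rewrite /mu; case: ifP => _; [left|right]; rewrite subrr.
case: (pselect (exists w, 0 < pi1 w - mu w)%R) => [[w0 hw0]|nex].
  have pos1 := @reach _ cl1 _ hw0.
  have eq2 : forall w, mu w = pi2 w.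
    move=> w; apply/eqP; rewrite eq_le; case/andP: (mu2 w) => _ -> /=.
    rewrite -subr_le0 leNgt; apply/negP => hw.
    have pos2 := @reach _ cl2 _ hw.
    by case: zero0 => h; [move: pos1|move: pos2]; rewrite h ltxx.
  move=> w; symmetry; apply: esum_le_eq => [t||].
  - by rewrite -eq2; apply: mu1.
  - by rewrite s1 s2.
  - by rewrite s1 ltry.
have eq1 : forall w, mu w = pi1 w.
  move=> w; apply/eqP; rewrite eq_le; case/andP: (mu1 w) => _ -> /=.
  rewrite -subr_le0 leNgt; apply/negP => hw.
  by apply: nex; exists w.
move=> w; apply: esum_le_eq => [t||].
- by rewrite -eq1; apply: mu2.
- by rewrite s1 s2.
- by rewrite s2 ltry.
Qed.

End Chain.

Lemma esum_part (R : realType) (A B : choiceType) (f : A -> B) (h : A -> \bar R) :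
  (forall a, 0 <= h a) ->
  \esum_(b in [set: B]) \esum_(a in [set: A]) (if f a == b then h a else 0) =
  \esum_(a in [set: A]) h a.
Proof.
move=> h0; rewrite esum_swap; last by move=> *; case: ifP.
apply: eq_esum => a _; rewrite -[RHS](@esum_point R B (f a) (h a))//.
by apply: eq_esum => b _; rewrite eq_sym.
Qed.

Section Lump.
Local Open Scope ring_scope.
Variables (R : realType) (V U : finType) (ex : rel V) (alpha : V -> R) (x : V)
  (eyz : rel U) (beta : U -> R) (y z : U) (phi : U -> V).
Hypothesis hyz : y != z.
Hypothesis phiy : phi y = x.
Hypothesis phiz : phi z = x.
Hypothesis phix : forall u, phi u = x -> u = y \/ u = z.
Hypothesis phiinj : {in [pred u | phi u != x] &, injective phi}.
Hypothesis phisurj : forall v, v != x -> exists u, phi u = v.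
Hypothesis he : forall u u', eyz u u' = ex (phi u) (phi u').
Hypothesis betay : beta y + beta z = alpha x.
Hypothesis betau : forall u, phi u != x -> beta u = alpha (phi u).

Lemma step_map w u :
  map phi (fcfs_step eyz w u) = fcfs_step ex (map phi w) (phi u).
Proof.
rewrite /fcfs_step find_map size_map.
have -> : find (preim phi (ex (phi u))) w = find (eyz u) w.
  by apply: eq_find => u' /=; rewrite he.
by case: ifP => _; rewrite ?map_cat ?map_take ?map_drop ?map_rcons.
Qed.

Lemma beta_fib i : \sum_(u | phi u == i) beta u = alpha i.
Proof.
have [->|nx] := eqVneq i x.
  rewrite (bigD1 y) ?phiy//= (bigD1 z) /=; last by rewrite phiz eqxx eq_sym hyz.
  rewrite big1 ?addr0// => u /andP[/andP[/eqP pu uy] uz].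
  by case: (phix _ pu) => h; move: uy uz; rewrite h eqxx ?andbF.
have [u0 pu0] := phisurj _ nx.
rewrite (bigD1 u0) ?pu0//= big1 ?addr0; first by rewrite betau pu0.
move=> u /andP[/eqP pu uu0]; move: uu0; rewrite (phiinj u u0) ?eqxx//.
- by rewrite inE /= pu.
- by rewrite inE /= pu0.
- by rewrite pu pu0.
Qed.

Lemma sum_lift (g : V -> R) :
  \sum_(u : U) beta u * g (phi u) = \sum_(i : V) alpha i * g i.
Proof.
under [RHS]eq_bigr do rewrite -beta_fib mulr_suml.
rewrite (exchange_big_dep xpredT) //=.
by apply: eq_bigr => u _; rewrite (big_pred1 (phi u)) // => i; rewrite eq_sym.
Qed.

Lemma lumpP (c : R) w v' : 0 <= c -> (forall u, 0 <= beta u) ->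
  \esum_(w' in [set: seq U])
     (if map phi w' == v' then (c * fcfs_trans eyz beta w w')%:E else 0%E) =
  (c * fcfs_trans ex alpha (map phi w) v')%:E.
Proof.
move=> c0 b0.
have sw (b : bool) (F : U -> \bar R) :
    (if b then \sum_(i : U) F i else 0%E) = \sum_(i : U) (if b then F i else 0%E).
  by case: b => //; rewrite big1.
under eq_esum => w' _ do rewrite (@P_EFin R U eyz beta c w w') sw.
rewrite esum_sum; last first.
  by move=> *; case: ifP => // _; case: ifP => // _; rewrite lee_fin mulr_ge0.
have pt u : \esum_(w' in [set: seq U]) (if map phi w' == v' then
      (if w' == fcfs_step eyz w u then (c * beta u)%:E else 0%E) else 0%E) =
    (c * (beta u * (map phi (fcfs_step eyz w u) == v')%:R))%:E.
  rewrite -[RHS](@esum_point R _ (fcfs_step eyz w u)); last first.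
    by rewrite lee_fin mulr_ge0 ?mulr_ge0.
  apply: eq_esum => w' _; case: (w' =P fcfs_step eyz w u) => [->|_]; last by case: ifP.
  by case: ifP => _; rewrite ?mulr1 ?mulr0.
under eq_bigr do rewrite pt step_map.
rewrite sumEFin -mulr_sumr (sum_lift (fun i => (fcfs_step ex (map phi w) i == v')%:R)).
congr (_ * _)%:E; rewrite /fcfs_trans [RHS]big_mkcond /=.
by apply: eq_bigr => i _; case: ifP; rewrite ?mulr1 ?mulr0.
Qed.

Variable piyz : seq U -> R.
Hypothesis stz : stationary eyz beta piyz.
Hypothesis beta0 : forall u, 0 <= beta u.
Hypothesis alpha0 : forall v, 0 <= alpha v.

Definition Fpush (v : seq V) := \esum_(w in [set: seq U])
  (if map phi w == v then (piyz w)%:E else 0%E).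
Definition Pi v := fine (Fpush v).

Lemma Fpush0 v : (0 <= Fpush v)%E.
Proof.
case: stz => p0 _ _; apply: esum_ge0 => w _; case: ifP => //; by rewrite lee_fin.
Qed.

Lemma PiE v : (Pi v)%:E = Fpush v.
Proof.
case: stz => p0 s1 _; rewrite /Pi fineK// ge0_fin_numE ?Fpush0//.
apply: (@le_lt_trans _ _ 1%E); last exact: ltry.
rewrite -s1; apply: le_esum => w _; case: ifP => // _; by rewrite lee_fin.
Qed.

Lemma Pi_stat : stationary ex alpha Pi.
Proof.
have [p0 s1 i1] := stz.
split.
- by move=> v; rewrite /Pi fine_ge0// Fpush0.
- under eq_esum do rewrite PiE.
  by rewrite /Fpush esum_part// => w; rewrite lee_fin.
move=> v'; rewrite PiE /Fpush.
have swif (b : bool) (F : seq U -> \bar R) :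
    (if b then \esum_(w in [set: seq U]) F w else 0%E) =
    \esum_(w in [set: seq U]) (if b then F w else 0%E).
  by case: b => //; rewrite esum1.
under eq_esum => w' _ do rewrite i1 swif.
rewrite esum_swap; last first.
  by move=> i j; case: ifP => // _; rewrite lee_fin mulr_ge0 ?p0 ?(@P_ge0 R _ eyz beta beta0).
under eq_esum => w _ do rewrite lumpP//.
have e2 v : (Pi v * fcfs_trans ex alpha v v')%:E = \esum_(w in [set: seq U])
   (if map phi w == v then (piyz w * fcfs_trans ex alpha (map phi w) v')%:E
    else 0%E).
  rewrite EFinM PiE muleC -esumZl ?(@P_ge0 R _ ex alpha alpha0)//; last first.
    by move=> w; case: ifP => // _; rewrite lee_fin.
  apply: eq_esum => w _; case: eqP => [->|_]; last by rewrite mule0.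
  by rewrite -EFinM mulrC.
under [RHS]eq_esum do rewrite e2.
rewrite esum_part// => w; by rewrite lee_fin mulr_ge0 ?(@P_ge0 R _ ex alpha alpha0).
Qed.

Lemma Pi_mean : mean_length Pi = mean_length piyz.
Proof.
have [p0 s1 i1] := stz.
rewrite /mean_length.
have e2 v : (Pi v * (size v)%:R)%:E = \esum_(w in [set: seq U])
   (if map phi w == v then (piyz w * (size w)%:R)%:E else 0%E).
  rewrite EFinM PiE muleC -esumZl//; last first.
    by move=> w; case: ifP => // _; rewrite lee_fin.
  apply: eq_esum => w _; case: eqP => [<-|_]; last by rewrite mule0.
  by rewrite -EFinM mulrC size_map.
under eq_esum do rewrite e2.
rewrite esum_part// => w; by rewrite lee_fin mulr_ge0.
Qed.

End Lump.

Lemma connect_nbr (T : finType) (e : rel T) u v :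
  connect e u v -> u != v -> exists u', e u u'.
Proof.
move/connectP => [p pth ->]; case: p pth => [|u' p] /=; first by rewrite eqxx.
by move/andP => [h _] _; exists u'.
Qed.

Close Scope ereal_scope.
Close Scope classical_set_scope.
Local Open Scope ring_scope.

Theorem mainTheorem12 (R : realType) (V U : finType)
    (ex : rel V) (alpha : V -> R) (x : V)
    (eyz : rel U) (beta : U -> R) (y z : U)
    (pix : seq V -> R) (piyz : seq U -> R) :
  matching_model ex alpha ->
  matching_model eyz beta ->
  decomposition ex alpha x eyz beta y z ->
  positive_recurrent ex alpha ->
  positive_recurrent eyz beta ->
  stationary ex alpha pix ->
  stationary eyz beta piyz ->
  mean_length pix = mean_length piyz.
Proof.
rewrite /matching_model /decomposition.
move=> [symx _ _ posx sumx] [_ _ connU posU _]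
  [phi [[hyz phiy phiz phix] [[phiinj phisurj he] [hby hbz bsum bu]]]] _ _ stx stz.
have alpha0 v : 0 <= alpha v by apply: ltW.
have beta0 u : 0 <= beta u by apply: ltW.
have nbr a : exists b, ex a b.
  have [u pu] : exists u, phi u = a.
    have [->|nx] := eqVneq a x; first by exists y.
    exact: phisurj.
  pose t := if u == y then z else y.
  have tu : u != t.
    by rewrite /t; case: (u =P y) => [->|/eqP h].
  have [u' hu'] := @connect_nbr _ _ _ _ (connU u t) tu.
  by exists (phi u'); rewrite -pu -he.
have stP := @Pi_stat _ _ _ _ _ _ _ _ _ _ _ hyz phiy phiz phix phiinj phisurj he bsum bu _ stz beta0 alpha0.
have eqP' := @stat_unique _ _ _ _ alpha0 sumx symx nbr posx _ _ stx stP.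
have -> : pix = Pi R V U phi piyz by apply: funext => w; exact: eqP'.
exact: (@Pi_mean _ _ _ _ _ _ _ stz).
Qed.
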